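(* HazardPointersPOP, as described in the context, is robust: the number of retired but not yet freed nodes is bounded, regardless of delayed or stalled threads.
   Context: Setting: an asynchronous shared-memory system with a fixed number $N$ of threads operating on a linked concurrent data structure; each unlinked node is retired by exactly one thread. HazardPointersPOP: each thread has at most $H$ local reservation slots, a row of a shared reservation array, a shared counter publishCounter and a private retire list. Reading a node stores its pointer into a local slot (validated by re-reading the source pointer) without publishing; local slots are cleared at the end of each operation. When a thread's retire list reaches a threshold $r$ it records all publishCounters, sends a POSIX signal to every other thread (whose handler copies its local reservations into its shared slots and increments its publishCounter), waits until all other publishCounters have increased, then frees every node in its retire list that is not among the published reservations. Assumption: after being signalled, a thread publishes its reservations within bounded time. *)

(* Defs.v *)
From mathcomp Require Import all_boot all_order.

Set Implicit Arguments.
Unset Strict Implicit.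
Unset Printing Implicit Defensive.

(* Nodes are identified by natural numbers (an unbounded supply).
   Threads are 'I_N, reservation slots of a thread are 'I_H. *)

Definition upd {I : eqType} {T : Type} (f : I -> T) (i : I) (v : T) : I -> T :=
  fun j => if j == i then v else f j.

(* Control state of a thread w.r.t. reclamation:
   - Running: executing data-structure operations;
   - Waiting snap: inside a reclamation, having recorded the publishCounters
     [snap] and signalled every other thread, waiting for all other
     publishCounters to increase. *)
Inductive phase (N : nat) :=
| Running
| Waiting of ('I_N -> nat).
Arguments Waiting {N}.

Record state (N H : nat) := mkState {
  local      : 'I_N -> 'I_H -> option nat;  (* private (unpublished) reservations *)
  shared     : 'I_N -> 'I_H -> option nat;
  pubCounter : 'I_N -> nat;
  pending    : 'I_N -> bool;                (* signal delivered but not yet handled *)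
  phase_of   : 'I_N -> phase N;
  rlist      : 'I_N -> seq nat;
  retired    : seq nat;                     (* all nodes retired so far *)
  freed      : seq nat                      (* all nodes freed so far *)
}.

Definition init_state (N H : nat) : state N H :=
  @mkState N H (fun _ _ => None) (fun _ _ => None) (fun _ => 0%N)
    (fun _ => false) (fun _ => Running N) (fun _ => [::]) [::] [::].

Inductive label (N H : nat) :=
| Protect of 'I_N & 'I_H & nat  (* read a node: store it in a local slot (validated read) *)
| ClearLocal of 'I_N            (* end of an operation: clear all local slots *)
| Retire of 'I_N & nat          (* retire an unlinked node (each node retired once) *)
| Handler of 'I_N               (* signal handler runs in the given thread *)
| Finish of 'I_N.               (* end of the wait: free unreserved nodes *)
Arguments Protect {N H}.
Arguments ClearLocal {N H}.
Arguments Retire {N H}.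
Arguments Handler {N H}.
Arguments Finish {N H}.

Definition published N H (s : state N H) (n : nat) : bool :=
  [exists j : 'I_N, [exists k : 'I_H, shared s j k == Some n]].

(* One transition of the system, with retire threshold r. *)
Definition step (N H r : nat) (s : state N H) (l : label N H) (s' : state N H)
  : Prop :=
  match l with
  | Protect i k n =>
      phase_of s i = Running N /\
      s' = mkState (upd (local s) i (upd (local s i) k (Some n)))
             (shared s) (pubCounter s) (pending s) (phase_of s)
             (rlist s) (retired s) (freed s)
  | ClearLocal i =>
      phase_of s i = Running N /\
      s' = mkState (upd (local s) i (fun _ => None))
             (shared s) (pubCounter s) (pending s) (phase_of s)
             (rlist s) (retired s) (freed s)
  | Retire i n =>
      phase_of s i = Running N /\ n \notin retired s /\
      let l' := n :: rlist s i in
      if r <= size l' then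
        s' = mkState (local s) (shared s) (pubCounter s)
               (fun j => if j == i then pending s j else true)
               (upd (phase_of s) i (Waiting (pubCounter s)))
               (upd (rlist s) i l') (n :: retired s) (freed s)
      else
        s' = mkState (local s) (shared s) (pubCounter s) (pending s)
               (phase_of s) (upd (rlist s) i l') (n :: retired s) (freed s)
  | Handler j =>
      pending s j /\
      s' = mkState (local s) (upd (shared s) j (local s j))
             (upd (pubCounter s) j (pubCounter s j).+1)
             (upd (pending s) j false) (phase_of s)
             (rlist s) (retired s) (freed s)
  | Finish i =>
      exists snap : 'I_N -> nat,
      phase_of s i = Waiting snap /\
      (forall j : 'I_N, j != i -> snap j < pubCounter s j) /\
      s' = mkState (local s) (shared s) (pubCounter s) (pending s)
             (upd (phase_of s) i (Running N))
             (upd (rlist s) i [seq n <- rlist s i | published s n])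
             (retired s)
             (freed s ++ [seq n <- rlist s i | ~~ published s n])
  end.

Definition execution (N H r : nat) (ex : nat -> state N H)
    (lab : nat -> label N H) : Prop :=
  ex 0 = init_state N H /\ forall t, step r (ex t) (lab t) (ex t.+1).

Definition bounded_publication (N H D : nat) (ex : nat -> state N H)
    (lab : nat -> label N H) : Prop :=
  forall (t : nat) (j : 'I_N), pending (ex t) j ->
    exists2 d, d <= D & lab (t + d) = Handler j.

Definition unfreed N H (s : state N H) : nat :=
  size [seq n <- retired s | n \notin freed s].

(* Main.v *)
Require Import Defs.
From mathcomp Require Import all_boot all_order.
From mathcomp Require Import zify.

Set Implicit Arguments.
Unset Strict Implicit.
Unset Printing Implicit Defensive.

Section Proof.
Variables N H r : nat.
Let M := r + N * H.

Definition Inv (s : state N H) : Prop :=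
  [/\ uniq (retired s),
      forall i, uniq (rlist s i),
      forall i, {subset rlist s i <= retired s},
      forall n, n \in retired s -> n \notin freed s -> exists i, n \in rlist s i
    & forall i, size (rlist s i) <= M.+1 /\
                (phase_of s i = Running N -> size (rlist s i) <= M)].

Lemma filter_pub_size (s : state N H) l : uniq l ->
  size [seq n <- l | published s n] <= N * H.
Proof.
move=> ul.
set S := pmap (fun p : 'I_N * 'I_H => shared s p.1 p.2) (enum {: 'I_N * 'I_H}).
have -> : N * H = #|{: 'I_N * 'I_H}| by rewrite card_prod !card_ord.
apply: (@leq_trans (size S)).
  apply: uniq_leq_size; first exact: filter_uniq.
  move=> x; rewrite mem_filter => /andP[/existsP[j /existsP[k /eqP Hjk]] _].
  rewrite mem_pmap; apply/mapP; exists (j, k); first by rewrite mem_enum.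
  by rewrite Hjk.
rewrite size_pmap; apply: leq_trans (count_size _ _) _; by rewrite cardE.
Qed.

Lemma init_inv : Inv (init_state N H).
Proof. by split => //= i; split. Qed.

Lemma step_inv s l s' : Inv s -> step r s l s' -> Inv s'.
Proof.
case=> U1 U2 Sub Cov Sz.
case: l => [i k n | i | i n | j | i] /=.
- by case=> _ ->; split.
- by case=> _ ->; split.
- case=> Hrun [Hn].
  have Hni : n \notin rlist s i by apply/negP => /Sub; rewrite (negbTE Hn).
  have HszI := (Sz i).2 Hrun.
  have common : forall ph : 'I_N -> phase N,
     (forall j, j != i -> ph j = phase_of s j) ->
     (ph i = Running N -> size (rlist s i) < r.-1) ->
     Inv (mkState (local s) (shared s) (pubCounter s) (pending s)
               ph (upd (rlist s) i (n :: rlist s i)) (n :: retired s) (freed s)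
         ).
  { move=> ph Hph Hphi; split => /=.
    - by rewrite Hn.
    - move=> j; rewrite /upd; case: eqP => _ //=; by rewrite Hni U2.
    - move=> j x; rewrite /upd; case: eqP => _ /=.
        by rewrite !inE => /orP[->|/Sub ->]; rewrite ?orbT.
      by move/Sub; rewrite inE => ->; rewrite orbT.
    - move=> x; rewrite inE => /orP[/eqP -> _|Hx Hf].
        by exists i; rewrite /upd eqxx inE eqxx.
      have [j Hj] := Cov x Hx Hf; exists j; rewrite /upd.
      by case: eqP => [Eji|_]; [subst j; rewrite inE Hj orbT|].
    - move=> j; rewrite /upd; case: eqP => [Eji|/eqP Hji] /=; first subst j.
        split; first lia.
        move=> /Hphi; lia.
      by rewrite Hph. }
  by case: ifP => Hr ->; apply: common => //; 
     [ move=> j Hj; rewrite /upd (negbTE Hj)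
     | rewrite /upd eqxx
     | move=> _; move: Hr => /negbT; rewrite -ltnNge /=; lia ].
- by case=> _ ->; split.
- case=> snap [Hph [_ ->]]; split => /=.
  + exact: U1.
  + by move=> j; rewrite /upd; case: eqP => _ //; rewrite filter_uniq.
  + move=> j x; rewrite /upd; case: eqP => _; last exact: Sub.
    by rewrite mem_filter => /andP[_ /Sub].
  + move=> x Hx; rewrite mem_cat negb_or => /andP[Hf Hf2].
    have [j Hj] := Cov x Hx Hf; exists j; rewrite /upd.
    case: eqP => [Eji|]; last by [].
    subst j; rewrite mem_filter Hj andbT.
    by move: Hf2; rewrite mem_filter Hj andbT negbK.
  + move=> j; rewrite /upd; case: eqP => [Eji|] /=; first subst j.
      have := filter_pub_size s (U2 i); rewrite /M; split; lia.
    by move=> _; exact: Sz.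
Qed.

Lemma sumn_bound (I : Type) (f : I -> nat) K (l : seq I) :
  (forall x, f x <= K) -> sumn (map f l) <= size l * K.
Proof.
move=> Hf; elim: l => //= x l IH; rewrite mulSn; exact: leq_add.
Qed.

Lemma inv_bound s : Inv s -> unfreed s <= N * M.+1.
Proof.
case=> U1 U2 Sub Cov Sz; rewrite /unfreed.
apply: (@leq_trans (size (flatten [seq rlist s i | i <- enum 'I_N]))).
  apply: uniq_leq_size; first exact: filter_uniq.
  move=> x; rewrite mem_filter => /andP[Hf Hx].
  have [i Hi] := Cov x Hx Hf.
  apply/flatten_mapP; exists i => //; by rewrite mem_enum.
rewrite size_flatten /shape -map_comp.
have := @sumn_bound _ (size \o rlist s) M.+1 (enum 'I_N).
rewrite size_enum_ord; apply => x /=; exact: (Sz x).1.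
Qed.

End Proof.

Theorem mainTheorem8 :
  forall N H r : nat, exists B : nat,
    forall (D : nat) (ex : nat -> state N H) (lab : nat -> label N H),
      execution r ex lab ->
      bounded_publication D ex lab ->
      forall t : nat, unfreed (ex t) <= B.
Proof.
move=> N H r; exists (N * (r + N * H).+1) => D ex lab [E0 Est] _ t.
apply: inv_bound.
elim: t => [|t IH]; first by rewrite E0; exact: init_inv.
exact: step_inv IH (Est t).
Qed.
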